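(* For all $n\ge1$, $d\ge2$ and $1\le r\le n$, $$b_{n,d}(\Delta_{n-r})=\sum_{x}b_{n,d-1}(x),$$ where the sum ranges over all simple $n$-braids $x$ that are right divisible by $\Delta_{n-r}$ in $B_n^+$.
   Context: $B_n^+$ is the positive braid monoid with generators $\sigma_1,\dots,\sigma_{n-1}$ and relations $\sigma_i\sigma_j=\sigma_j\sigma_i$ ($|i-j|\ge2$), $\sigma_i\sigma_j\sigma_i=\sigma_j\sigma_i\sigma_j$ ($|i-j|=1$). $\Delta_1=1$, $\Delta_m=\sigma_1\cdots\sigma_{m-1}\Delta_{m-1}$, with the convention $\Delta_0=1$; $\Delta_m$ is viewed in $B_n^+$ for $m\le n$. Simple $n$-braids are the left (equivalently right) divisors of $\Delta_n$ in $B_n^+$. For simple $x$, $D_L(x)$ (resp. $D_R(x)$) is the set of $i\in\{1,\dots,n-1\}$ with $\sigma_i$ a left (resp. right) divisor of $x$. A sequence $(x_1,\dots,x_d)$ of simple $n$-braids is normal if $x_k=\gcd(\Delta_n,x_k\cdots x_d)$ (greatest common left divisor) for each $k$; equivalently $D_R(x_k)\supseteq D_L(x_{k+1})$ for all $k<d$. For a simple $n$-braid $x$, $b_{n,d}(x)$ is the number of normal sequences $(x_1,\dots,x_{d-1},x)$. *)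

(* Defs.v *)
From Stdlib Require Import Relation_Operators.
From mathcomp Require Import all_boot.
From mathcomp Require Import boolp.



Unset Printing Implicit Defensive.

(* Generators of B_n^+ : i : 'I_n.-1 stands for sigma_(i+1). *)
Definition gen (n : nat) := 'I_n.-1.
Definition word (n : nat) := seq (gen n).

(* defining relations of B_n^+ (as unordered instances, listed in one
   direction; symmetry is added by the closure below) *)
Definition braid_rel (n : nat) (u v : word n) : Prop :=
  (exists i j : gen n, ((i.+1 < j) || (j.+1 < i))%N /\
     u = [:: i; j] /\ v = [:: j; i]) \/
  (exists i j : gen n, ((i.+1 == j) || (j.+1 == i)) /\
     u = [:: i; j; i] /\ v = [:: j; i; j]).

Definition bstep (n : nat) (u v : word n) : Prop :=
  exists a b x y : word n, braid_rel n x y /\ u = a ++ x ++ b /\ v = a ++ y ++ b.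

Definition beq (n : nat) : word n -> word n -> Prop :=
  clos_refl_sym_trans (word n) (bstep n).

(* Delta_0 = Delta_1 = 1, Delta_m = sigma_1 ... sigma_(m-1) Delta_(m-1) *)
Fixpoint delta (n : nat) (m : nat) : word n :=
  match m with
  | 0 => [::]
  | m'.+1 => pmap (fun i => (insub i : option (gen n))) (iota 0 m') ++ delta n m'
  end.

Definition ldiv (n : nat) (u w : word n) : Prop := exists v, beq n (u ++ v) w.
Definition rdiv (n : nat) (u w : word n) : Prop := exists v, beq n (v ++ u) w.

Definition simple (n : nat) (w : word n) : Prop := ldiv n w (delta n n).

(* Finite carrier: words of length <= |Delta_n| (all simple braids have
   representatives there); one canonical representative per class. *)
Definition BW (n : nat) := {m : 'I_(size (delta n n)).+1 & m.-tuple (gen n)}.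
Definition bw2w (n : nat) (x : BW n) : word n := tagged x.
Definition is_rep (n : nat) (x : BW n) : bool :=
  [pick y : BW n | `[< beq n (bw2w n y) (bw2w n x) >] ] == Some x.

Definition SB (n : nat) := {x : BW n | is_rep n x && `[< simple n (bw2w n x) >]}.
Definition sbw (n : nat) (s : SB n) : word n := bw2w n (val s).

Definition DL (n : nat) (w : word n) : {set gen n} := [set i | `[< ldiv n [:: i] w >]].
Definition DR (n : nat) (w : word n) : {set gen n} := [set i | `[< rdiv n [:: i] w >]].

Definition nrel (n : nat) : rel (word n) := fun u v => DL n v \subset DR n u.
Definition normal (n : nat) (s : seq (word n)) : bool := sorted (nrel n) s.

Definition b (n d : nat) (x : word n) : nat :=
  #|[set t : (d.-1).-tuple (SB n) | normal n (rcons (map (sbw n) t) x)]|.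

(* Main.v *)
Require Import Defs.
From Stdlib Require Import Relation_Operators.
From mathcomp Require Import all_boot.
From mathcomp Require Import boolp.
From mathcomp Require Import zify.

Definition farN (a b : nat) := (a.+1 < b) || (b.+1 < a).
Definition adjN (a b : nat) := (a.+1 == b) || (b.+1 == a).

Lemma farNC a b : farN a b -> farN b a. Proof. rewrite /farN; lia. Qed.
Lemma adjNC a b : adjN a b -> adjN b a. Proof. rewrite /adjN; lia. Qed.
Lemma farN_adjN a b : farN a b -> adjN a b -> False. Proof. rewrite /farN /adjN; lia. Qed.
Lemma farNn a : farN a a -> False. Proof. rewrite /farN; lia. Qed.
Lemma adjNn a : adjN a a -> False. Proof. rewrite /adjN; lia. Qed.
Lemma far_or_adj a b : a <> b -> farN a b \/ adjN a b.
Proof. move=> H. have: a != b by apply/eqP. rewrite /farN /adjN; lia. Qed.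
Arguments farNC {a b}. Arguments adjNC {a b}. Arguments far_or_adj {a b}.
Arguments farN_adjN {a b}. Arguments farNn {a}. Arguments adjNn {a}.

Inductive stepN : seq nat -> seq nat -> Prop :=
| StF a b x y : farN x y -> stepN (a ++ [:: x; y] ++ b) (a ++ [:: y; x] ++ b)
| StA a b x y : adjN x y -> stepN (a ++ [:: x; y; x] ++ b) (a ++ [:: y; x; y] ++ b).

Set Implicit Arguments.
Unset Strict Implicit.

Definition beqN := clos_refl_sym_trans (seq nat) stepN.

Lemma br0 x : beqN x x. Proof. exact: rst_refl. Qed.
Lemma bs x y : beqN x y -> beqN y x. Proof. exact: rst_sym. Qed.
Lemma bt y x z : beqN x y -> beqN y z -> beqN x z. Proof. exact: rst_trans. Qed.
Arguments bt y {x z}.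

Lemma stepN_sym x y : stepN x y -> stepN y x.
Proof.
case=> a b x' y' H.
- by apply: StF; apply: farNC.
- by apply: StA; apply: adjNC.
Qed.

Lemma beqN_catl a x y : beqN x y -> beqN (a ++ x) (a ++ y).
Proof.
elim=> {x y} [x y H| x | x y _ IH | x y z _ IH1 _ IH2].
- apply: rst_step; case: H => a' b' x' y' H.
  + by move: (StF (a ++ a') b' _ _ H); rewrite -!catA.
  + by move: (StA (a ++ a') b' _ _ H); rewrite -!catA.
- exact: br0.
- exact: bs.
- exact: bt IH2.
Qed.

Lemma beqN_catr b x y : beqN x y -> beqN (x ++ b) (y ++ b).
Proof.
elim=> {x y} [x y H| x | x y _ IH | x y z _ IH1 _ IH2].
- apply: rst_step; case: H => a' b' x' y' H; rewrite -!catA.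
  + by apply: StF. + by apply: StA.
- exact: br0.
- exact: bs.
- exact: bt IH2.
Qed.

Lemma beqN_cat x y x' y' : beqN x y -> beqN x' y' -> beqN (x ++ x') (y ++ y').
Proof. move=> H1 H2; apply: (bt (y ++ x')); [exact: beqN_catr | exact: beqN_catl]. Qed.

Lemma bc c x y : beqN x y -> beqN (c :: x) (c :: y).
Proof. exact: (beqN_catl [:: c]). Qed.

Lemma stepN_size x y : stepN x y -> size x = size y.
Proof. by case=> a b x' y' _; rewrite !size_cat. Qed.

Lemma beqN_size x y : beqN x y -> size x = size y.
Proof.
elim=> {x y} [x y H| x | x y _ IH | x y z _ IH1 _ IH2] //.
- exact: stepN_size. - by rewrite IH1.
Qed.

Lemma beqN_all (B : nat) x y : beqN x y -> all (fun c => c < B) x = all (fun c => c < B) y.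
Proof.
elim=> {x y} [x y H| x | x y _ IH | x y z _ IH1 _ IH2] //.
- case: H => a b x' y' _; rewrite !all_cat /=; lia.
- by rewrite IH1.
Qed.

Lemma beqN_rev x y : beqN x y -> beqN (rev x) (rev y).
Proof.
elim=> {x y} [x y H| x | x y _ IH | x y z _ IH1 _ IH2].
- apply: rst_step; case: H => a b x' y' H; rewrite !rev_cat -!catA.
  + have -> : rev [:: x'; y'] = [:: y'; x'] by [].
    have -> : rev [:: y'; x'] = [:: x'; y'] by [].
    exact: (StF (rev b) (rev a) _ _ (farNC H)).
  + have -> : rev [:: x'; y'; x'] = [:: x'; y'; x'] by [].
    have -> : rev [:: y'; x'; y'] = [:: y'; x'; y'] by [].
    exact: (StA (rev b) (rev a) _ _ H).
- exact: br0.
- exact: bs.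
- exact: bt IH2.
Qed.

Lemma sw a b x y : farN x y -> beqN (a ++ x :: y :: b) (a ++ y :: x :: b).
Proof. move=> H; apply: rst_step; exact: (StF a b _ _ H). Qed.
Lemma br a b x y : adjN x y -> beqN (a ++ x :: y :: x :: b) (a ++ y :: x :: y :: b).
Proof. move=> H; apply: rst_step; exact: (StA a b _ _ H). Qed.

Lemma beqN_rt x y : beqN x y -> clos_refl_trans_1n (seq nat) stepN x y.
Proof.
have rtt : forall x y z, clos_refl_trans_1n (seq nat) stepN x y ->
   clos_refl_trans_1n (seq nat) stepN y z -> clos_refl_trans_1n (seq nat) stepN x z.
  move=> x0 y0 z0; elim=> // x1 y1 z1 H _ IH /IH; exact: rt1n_trans.
have rts : forall x y, clos_refl_trans_1n (seq nat) stepN x y ->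
   clos_refl_trans_1n (seq nat) stepN y x.
  move=> x0 y0; elim; first by move=> ?; apply: rt1n_refl.
  move=> x1 y1 z1 H _ IH; apply: rtt IH _.
  apply: rt1n_trans; [exact: stepN_sym H| exact: rt1n_refl].
elim=> {x y} [x y H| x | x y _ IH | x y z _ IH1 _ IH2].
- apply: rt1n_trans H _; exact: rt1n_refl.
- exact: rt1n_refl.
- exact: rts.
- exact: rtt IH2.
Qed.

Definition Krel i u j v :=
  (i = j /\ beqN u v) \/
  (farN i j /\ exists w, beqN u (j :: w) /\ beqN v (i :: w)) \/
  (adjN i j /\ exists w, beqN u (j :: i :: w) /\ beqN v (i :: j :: w)).

Lemma Krel_sym i u j v : Krel i u j v -> Krel j v i u.
Proof.
case=> [[-> H]|[[H [w [H1 H2]]]|[H [w [H1 H2]]]]].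
- by left; split=> //; apply: bs.
- by right; left; split; [apply: farNC | exists w].
- by right; right; split; [apply: adjNC | exists w].
Qed.

Lemma Krel_tr i u j v u' v' : Krel i u j v -> beqN u u' -> beqN v v' -> Krel i u' j v'.
Proof.
move=> K Hu Hv; have Hu' := bs Hu; have Hv' := bs Hv.
case: K => [[-> H]|[[H [w [H1 H2]]]|[H [w [H1 H2]]]]].
- by left; split=> //; apply: bt Hv; apply: bt H.
- by right; left; split=> //; exists w; split; [apply: bt H1| apply: bt H2].
- by right; right; split=> //; exists w; split; [apply: bt H1| apply: bt H2].
Qed.

Lemma Krel_far i u j v : farN i j -> Krel i u j v ->
  exists w, beqN u (j :: w) /\ beqN v (i :: w).
Proof.
move=> F; case=> [[E H]|[[H [w [H1 H2]]]|[H [w [H1 H2]]]]].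
- by subst; case: (farNn F).
- by exists w.
- by case: (farN_adjN F H).
Qed.

Lemma Krel_adj i u j v : adjN i j -> Krel i u j v ->
  exists w, beqN u (j :: i :: w) /\ beqN v (i :: j :: w).
Proof.
move=> F; case=> [[E H]|[[H [w [H1 H2]]]|[H [w [H1 H2]]]]].
- by subst; case: (adjNn F).
- by case: (farN_adjN H F).
- by exists w.
Qed.

Lemma Krel_eq i u v : Krel i u i v -> beqN u v.
Proof.
case=> [[E H]|[[H [w [H1 H2]]]|[H [w [H1 H2]]]]] //.
- by case: (farNn H).
- by case: (adjNn H).
Qed.

Lemma Krel_step i u j v : stepN (i :: u) (j :: v) -> Krel i u j v.
Proof.
move=> H; inversion H as [a b x y F E1 E2|a b x y F E1 E2]; subst.
- case: a E1 E2 => [|c a] /= [<- <-] [<- <-].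
  + by right; left; split=> //; exists b; split; apply: br0.
  + by left; split=> //; apply: rst_step; exact: StF.
- case: a E1 E2 => [|c a] /= [<- <-] [<- <-].
  + by right; right; split=> //; exists b; split; apply: br0.
  + by left; split=> //; apply: rst_step; exact: StA.
Qed.
Arguments beqN_catl a {x y}.
Arguments bc c {x y}.
Arguments beqN_catr b {x y}.
Arguments sw a {b x y}.
Arguments br a {b x y}.

Ltac szs := repeat match goal with H : beqN _ _ |- _ => move: (beqN_size H); clear H end;
  intros; simpl in *; lia.

Section Comb.
Variable S : nat.
Hypothesis Hk : forall a c x y, size x < S -> beqN (a :: x) (c :: y) -> Krel a x c y.

Lemma comb_FA i u k t j v : size t = S -> farN i k -> adjN k j -> i <> j ->
  Krel i u k t -> Krel k t j v -> Krel i u j v.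
Proof.
move=> St Fik Akj Nij K1 K2.
case: (Krel_far Fik K1) => w1 [Hu Ht1].
case: (Krel_adj Akj K2) => w2 [Ht2 Hv].
have E : beqN (i :: w1) (j :: (k :: w2)) := bt t (bs Ht1) Ht2.
have Sw1 : size w1 < S by szs.
case: (far_or_adj Nij) => Fij.
- case: (Krel_far Fij (Hk Sw1 E)) => z [Hw1 Hkw2].
  have Sw2 : size w2 < S by szs.
  case: (Krel_far (farNC Fik) (Hk Sw2 Hkw2)) => z' [Hw2 Hz].
  right; left; split=> //; exists (k :: j :: z'); split.
  + apply: (bt _ Hu); apply: (bt (k :: j :: z)); first exact: bc.
    apply: (bt (k :: j :: k :: z')); first exact: (beqN_catl [:: k; j]).
    exact: (br [::]).
  + apply: (bt _ Hv); apply: (bt (k :: j :: i :: z')); first exact: (beqN_catl [:: k; j]).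
    apply: (bt (k :: i :: j :: z')); first by apply: (sw [:: k]); apply: farNC.
    by apply: (sw [::]); apply: farNC.
- case: (Krel_adj Fij (Hk Sw1 E)) => z [Hw1 Hkw2].
  have Sw2 : size w2 < S by szs.
  case: (Krel_far (farNC Fik) (Hk Sw2 Hkw2)) => z' [Hw2 Hjz].
  have Sz : size z < S by szs.
  case: (Krel_adj (adjNC Akj) (Hk Sz Hjz)) => z'' [Hz Hz'].
  right; right; split=> //; exists (k :: j :: i :: z''); split.
  + apply: (bt _ Hu); apply: (bt (k :: j :: i :: z)); first exact: bc.
    apply: (bt (k :: j :: i :: k :: j :: z'')); first exact: (beqN_catl [:: k; j; i]).
    apply: (bt (k :: j :: k :: i :: j :: z'')); first exact: (sw [:: k; j]).
    apply: (bt (j :: k :: j :: i :: j :: z'')); first exact: (br [::]).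
    apply: (bt (j :: k :: i :: j :: i :: z'')); first by apply: (br [:: j; k]); apply: adjNC.
    by apply: (sw [:: j]); apply: farNC.
  + apply: (bt _ Hv); apply: (bt (k :: j :: i :: z')); first exact: (beqN_catl [:: k; j]).
    apply: (bt (k :: j :: i :: j :: k :: z'')); first exact: (beqN_catl [:: k; j; i]).
    apply: (bt (k :: i :: j :: i :: k :: z'')); first by apply: (br [:: k]); apply: adjNC.
    apply: (bt (i :: k :: j :: i :: k :: z'')); first by apply: (sw [::]); apply: farNC.
    apply: (bt (i :: k :: j :: k :: i :: z'')); first exact: (sw [:: i; k; j]).
    exact: (br [:: i]).
Qed.

Lemma comb i u k t j v : size t = S -> Krel i u k t -> Krel k t j v -> Krel i u j v.
Proof.
move=> St K1 K2.
have [Eik|Nik] := eqVneq i k.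
  subst k; exact: Krel_tr K2 (bs (Krel_eq K1)) (br0 v).
have [Ekj|Nkj] := eqVneq k j.
  subst j; exact: Krel_tr K1 (br0 u) (Krel_eq K2).
have Nik' : i <> k by apply/eqP.
have Nkj' : k <> j by apply/eqP.
have [Eij|Nij] := eqVneq i j.
  subst j; left; split=> //.
  case: (far_or_adj Nik') => Fik.
  - case: (Krel_far Fik K1) => w1 [Hu Ht1].
    case: (Krel_far (farNC Fik) K2) => w2 [Ht2 Hv].
    have E : beqN (i :: w1) (i :: w2) := bt t (bs Ht1) Ht2.
    have Sw1 : size w1 < S by szs.
    have Hw := Krel_eq (Hk Sw1 E).
    apply: (bt _ Hu); apply: bs; apply: (bt _ Hv); exact: bc (bs Hw).
  - case: (Krel_adj Fik K1) => w1 [Hu Ht1].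
    case: (Krel_adj (adjNC Fik) K2) => w2 [Ht2 Hv].
    have E : beqN (i :: k :: w1) (i :: k :: w2) := bt t (bs Ht1) Ht2.
    have Sw1 : size (k :: w1) < S by szs.
    have E2 := Krel_eq (Hk Sw1 E).
    have Sw1' : size w1 < S by szs.
    have Hw := Krel_eq (Hk Sw1' E2).
    apply: (bt _ Hu); apply: bs; apply: (bt _ Hv); exact: (beqN_catl [:: k; i]) (bs Hw).
have Nij' : i <> j by apply/eqP.
case: (far_or_adj Nik') => Fik; case: (far_or_adj Nkj') => Fkj.
- case: (Krel_far Fik K1) => w1 [Hu Ht1].
  case: (Krel_far Fkj K2) => w2 [Ht2 Hv].
  have E : beqN (i :: w1) (j :: w2) := bt t (bs Ht1) Ht2.
  have Sw1 : size w1 < S by szs.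
  case: (far_or_adj Nij') => Fij.
  + case: (Krel_far Fij (Hk Sw1 E)) => z [Hw1 Hw2].
    right; left; split=> //; exists (k :: z); split.
    * apply: (bt _ Hu); apply: (bt (k :: j :: z)); first exact: bc.
      exact: (sw [::]).
    * apply: (bt _ Hv); apply: (bt (k :: i :: z)); first exact: bc.
      by apply: (sw [::]); apply: farNC.
  + case: (Krel_adj Fij (Hk Sw1 E)) => z [Hw1 Hw2].
    right; right; split=> //; exists (k :: z); split.
    * apply: (bt _ Hu); apply: (bt (k :: j :: i :: z)); first exact: bc.
      apply: (bt (j :: k :: i :: z)); first exact: (sw [::]).
      by apply: (sw [:: j]); apply: farNC.
    * apply: (bt _ Hv); apply: (bt (k :: i :: j :: z)); first exact: bc.
      apply: (bt (i :: k :: j :: z)); first by apply: (sw [::]); apply: farNC.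
      exact: (sw [:: i]).
- exact: (comb_FA St Fik Fkj Nij' K1 K2).
- apply: Krel_sym.
  have Nji : j <> i by move=> E; apply: Nij'.
  exact: (comb_FA St (farNC Fkj) (adjNC Fik) Nji (Krel_sym K2) (Krel_sym K1)).
- have Fij : farN i j by move: Fik Fkj Nij; rewrite /farN /adjN; lia.
  case: (Krel_adj Fik K1) => w1 [Hu Ht1].
  case: (Krel_adj Fkj K2) => w2 [Ht2 Hv].
  have E : beqN (i :: k :: w1) (j :: k :: w2) := bt t (bs Ht1) Ht2.
  have Sw1 : size (k :: w1) < S by szs.
  case: (Krel_far Fij (Hk Sw1 E)) => z [Hkw1 Hkw2].
  have Sw1' : size w1 < S by szs.
  case: (Krel_adj Fkj (Hk Sw1' Hkw1)) => z1 [Hw1 Hz1].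
  have Sw2' : size w2 < S by szs.
  case: (Krel_adj (adjNC Fik) (Hk Sw2' Hkw2)) => z2 [Hw2 Hz2].
  have E2 : beqN (k :: j :: z1) (k :: i :: z2) := bt z (bs Hz1) Hz2.
  have Sz1 : size (j :: z1) < S by szs.
  have E3 := Krel_eq (Hk Sz1 E2).
  have Sz1' : size z1 < S by szs.
  case: (Krel_far (farNC Fij) (Hk Sz1' E3)) => z3 [Hz3 Hz3'].
  right; left; split=> //; exists (k :: j :: i :: k :: z3); split.
  + apply: (bt _ Hu); apply: (bt (k :: i :: j :: k :: z1)); first exact: (beqN_catl [:: k; i]).
    apply: (bt (k :: i :: j :: k :: i :: z3)); first exact: (beqN_catl [:: k; i; j; k]).
    apply: (bt (k :: j :: i :: k :: i :: z3)); first exact: (sw [:: k]).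
    apply: (bt (k :: j :: k :: i :: k :: z3)); first exact: (br [:: k; j]).
    exact: (br [::]).
  + apply: (bt _ Hv); apply: (bt (k :: j :: i :: k :: z2)); first exact: (beqN_catl [:: k; j]).
    apply: (bt (k :: j :: i :: k :: j :: z3)); first exact: (beqN_catl [:: k; j; i; k]).
    apply: (bt (k :: i :: j :: k :: j :: z3)); first by apply: (sw [:: k]); apply: farNC.
    apply: (bt (k :: i :: k :: j :: k :: z3)); first by apply: (br [:: k; i]); apply: adjNC.
    apply: (bt (i :: k :: i :: j :: k :: z3)); first by apply: (br [::]); apply: adjNC.
    exact: (sw [:: i; k]).
Qed.
End Comb.

Lemma key_aux N : forall u, size u < N -> forall i j v, beqN (i :: u) (j :: v) -> Krel i u j v.
Proof.
elim: N => [//|N IH] u Hu i j v H.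
have Hk : forall a c x y, size x < size u -> beqN (a :: x) (c :: y) -> Krel a x c y.
  move=> a c x y Hx; apply: IH; lia.
suff Hs : forall W1 W2, clos_refl_trans_1n _ stepN W1 W2 -> forall i0 u0 j0 v0,
    W1 = i0 :: u0 -> W2 = j0 :: v0 -> size u0 = size u -> Krel i0 u0 j0 v0.
  exact: (Hs _ _ (beqN_rt H) i u j v erefl erefl erefl).
move=> W1 W2; elim => [x | x y z Hxy Hyz IHc] i0 u0 j0 v0 E1 E2 Su.
- rewrite E1 in E2; case: E2 => <- <-; left; split=> //; exact: br0.
- subst x; case: y Hxy Hyz IHc => [|k t] Hxy Hyz IHc.
    by have := stepN_size Hxy.
  have St : size t = size u by move: (stepN_size Hxy) => /= [<-].
  exact: (comb Hk St (Krel_step Hxy) (IHc k t j0 v0 erefl E2 St)).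
Qed.

Lemma key i j u v : beqN (i :: u) (j :: v) -> Krel i u j v.
Proof. exact: (key_aux (ltnSn (size u))). Qed.

Fixpoint DN (m : nat) : seq nat :=
  match m with 0 => [::] | m'.+1 => iota 0 m' ++ DN m' end.
Lemma DN_S m : DN m.+1 = iota 0 m ++ DN m. Proof. by []. Qed.
Definition Lc j l := rev (iota j l).
Definition ldivN a x := exists v, beqN (a ++ v) x.
Definition rdivN a x := exists v, beqN (v ++ a) x.

Lemma Lc_S j l : Lc j l.+1 = (j + l) :: Lc j l.
Proof. by rewrite /Lc -addn1 iotaD rev_cat. Qed.

Lemma comm_far s a : all (fun c => farN c a) s -> beqN (s ++ [:: a]) (a :: s).
Proof.
elim: s => [|c s IH] /=; first by move=> _; apply: br0.
case/andP=> Hc Hs; apply: (bt (c :: a :: s)); first exact: bc (IH Hs).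
exact: (sw [::]).
Qed.

Lemma ldivN_tr a x x' : beqN x x' -> ldivN a x -> ldivN a x'.
Proof. by move=> H [v Hv]; exists v; apply: bt H. Qed.

Lemma ldivN_trl a a' x : beqN a a' -> ldivN a x -> ldivN a' x.
Proof. by move=> H [v Hv]; exists v; apply: bt Hv; apply: beqN_catr; apply: bs. Qed.

Lemma lemF a s y : all (fun c => farN a c) s -> ldivN [:: a] (s ++ y) -> ldivN [:: a] y.
Proof.
elim: s => [|c s IH] //= /andP [Hc Hs] [v Hv]; apply: IH => //.
case: (Krel_far Hc (key Hv)) => w [_ Hw]; exists w; exact: bs.
Qed.

Lemma lemC l : forall j z u, beqN (j :: z) (Lc j.+1 l.+1 ++ u) ->
  exists w, beqN z (Lc j l.+2 ++ w).
Proof.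
elim: l => [|l IH] j z u.
- rewrite !Lc_S /Lc /= addn0 addn1 => H.
  have Ha : adjN j j.+1 by rewrite /adjN eqxx.
  case: (Krel_adj Ha (key H)) => w [Hw _]; by exists w; rewrite addn0.
- rewrite Lc_S /= => H.
  have Hf : farN j (j.+1 + l.+1) by rewrite /farN; lia.
  case: (Krel_far Hf (key H)) => w' [Hz Hw'].
  case: (IH j w' u (bs Hw')) => w Hw; exists w.
  rewrite (Lc_S j l.+2); apply: (bt _ Hz).
  have -> : j.+1 + l.+1 = j + l.+2 by lia.
  exact: (bc _ Hw).
Qed.

Lemma lemG j : forall l y, ldivN (Lc j l.+1) (Lc 0 j ++ y) -> ldivN (Lc 0 (j + l.+1)) y.
Proof.
elim: j => [|j IH] l y; first by rewrite add0n.
rewrite (Lc_S 0 j) add0n => - [v Hv].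
case: (lemC (bs Hv)) => w Hw.
have := IH l.+1 y; rewrite -addSnnS; apply; exists w; exact: bs.
Qed.

Lemma DN_all m : all (fun c => c < m.-1) (DN m).
Proof.
elim: m => [|m IH] //=; rewrite all_cat; apply/andP; split.
- by apply/allP => c; rewrite mem_iota; lia.
- by apply: sub_all IH => c; lia.
Qed.

Lemma DN_far m : all (fun c => farN c m) (DN m).
Proof. by apply: sub_all (DN_all m) => c; rewrite /farN; lia. Qed.

Lemma lemQ m : beqN (DN m.+1) (DN m ++ Lc 0 m).
Proof.
elim: m => [|m IH]; first exact: br0.
rewrite (DN_S m.+1).
apply: (bt (iota 0 m.+1 ++ DN m ++ Lc 0 m)); first exact: beqN_catl.
rewrite (DN_S m) (Lc_S 0 m) add0n -addn1 iotaD add0n -!catA; apply: beqN_catl.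
rewrite catA; apply: (bt ((DN m ++ [:: m]) ++ Lc 0 m)).
  apply: beqN_catr; apply: bs; exact: (comm_far (DN_far m)).
by rewrite -catA; apply: br0.
Qed.

Lemma DN_rev m : beqN (rev (DN m)) (DN m).
Proof.
elim: m => [|m IH]; first exact: br0.
rewrite DN_S rev_cat; apply: bs; apply: (bt _ (lemQ m)); apply: bs.
exact: beqN_catr.
Qed.

Lemma shiftN i m : i.+1 < m -> beqN (iota 0 m ++ [:: i]) (i.+1 :: iota 0 m).
Proof.
move=> Hm; have -> : m = i + (m - i.+2).+2 by lia.
rewrite iotaD add0n /=; set r := iota i.+2 _.
have Hr : all (fun c => farN c i) r by apply/allP => c; rewrite mem_iota; rewrite /farN; lia.
have Hr' : all (fun c => farN c i.+1) (iota 0 i) by apply/allP => c; rewrite mem_iota; rewrite /farN; lia.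
apply: (bt (iota 0 i ++ [:: i, i.+1, i & r])).
  rewrite -catA /=; apply: (beqN_catl (iota 0 i)); apply: (beqN_catl [:: i; i.+1]); exact: comm_far.
apply: (bt (iota 0 i ++ [:: i.+1, i, i.+1 & r])).
  by apply: (br (iota 0 i)); rewrite /adjN eqxx.
have := beqN_catr [:: i, i.+1 & r] (comm_far Hr'); rewrite -catA; apply.
Qed.

Lemma ldiv_DN m i : i < m -> ldivN [:: i] (DN m.+1).
Proof.
elim: m i => [//|m IH] [|i] Hi.
- by exists (iota 1 m ++ DN m.+1); apply: br0.
- case: (IH i Hi) => v Hv; exists (iota 0 m.+1 ++ v).
  apply: bs; rewrite (DN_S m.+1).
  apply: (bt (iota 0 m.+1 ++ i :: v)); first exact: (beqN_catl _ (bs Hv)).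
  have := beqN_catr v (shiftN Hi); rewrite -catA; apply.
Qed.

Lemma ldiv_DN_inv m i : ldivN [:: i] (DN m.+1) -> i < m.
Proof. by case=> v /(beqN_all m); rewrite (DN_all m.+1) /= => /andP []. Qed.

Lemma left_lcm m x : (forall i, i < m -> ldivN [:: i] x) -> ldivN (DN m.+1) x.
Proof.
elim: m x => [|m IH] x H; first by exists x; apply: br0.
case: (IH x (fun i Hi => H i (ltnW Hi))) => y Hy.
have Hm : ldivN [:: m] (DN m ++ (Lc 0 m ++ y)).
  apply: (ldivN_tr (x := x)); last exact: H.
  apply: bs; apply: (bt (DN m.+1 ++ y)); last exact: Hy.
  rewrite catA; apply: bs; exact: beqN_catr _ (lemQ m).
have Hf : all (fun c => farN m c) (DN m) by apply: sub_all (DN_far m) => c; apply: farNC.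
have := lemF Hf Hm; rewrite -[[:: m]]/(Lc m 1) => /(lemG (l := 0)) [w Hw].
exists w; apply: (bt (DN m.+1 ++ y)); last exact: Hy.
rewrite addn1 in Hw.
apply: (bt (DN m.+1 ++ Lc 0 m.+1 ++ w)); last exact: beqN_catl.
rewrite catA; apply: beqN_catr; exact: lemQ.
Qed.

Lemma rdiv_ldiv a x : rdivN a x <-> ldivN (rev a) (rev x).
Proof.
split=> [[v Hv]|[v Hv]].
- by exists (rev v); rewrite -rev_cat; apply: beqN_rev.
- exists (rev v); move: (beqN_rev Hv); rewrite rev_cat !revK => H; exact: H.
Qed.

Lemma rdivN_trans a b c : rdivN a b -> rdivN b c -> rdivN a c.
Proof.
move=> [v1 H1] [v2 H2]; exists (v2 ++ v1); apply: (bt (v2 ++ b)); last exact: H2.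
rewrite -catA; exact: beqN_catl.
Qed.

Lemma rdiv_DN m i : i < m -> rdivN [:: i] (DN m.+1).
Proof.
move=> Hi; apply/rdiv_ldiv; apply: (ldivN_tr (bs (DN_rev _))); exact: ldiv_DN.
Qed.

Lemma mainN M s : (forall i, i < M -> rdivN [:: i] s) <-> rdivN (DN M.+1) s.
Proof.
split=> [H|H i Hi].
- have : ldivN (DN M.+1) (rev s).
    by apply: left_lcm => i Hi; have := H i Hi; move/rdiv_ldiv.
  move/(ldivN_trl (bs (DN_rev _))) => H'; apply/rdiv_ldiv; exact: H'.
- exact: rdivN_trans (rdiv_DN Hi) H.
Qed.

Section Transfer.
Variable n : nat.
Definition vw (u : word n) : seq nat := map (fun i : gen n => nat_of_ord i) u.
Definition uw (s : seq nat) : word n := pmap (fun i => (insub i : option (gen n))) s.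

Lemma uwK u : uw (vw u) = u.
Proof. exact: (map_pK valK). Qed.

Lemma vwK s : all (fun c => c < n.-1) s -> vw (uw s) = s.
Proof.
elim: s => [|c s IH] //= /andP [Hc Hs].
by rewrite /uw /= (insubT (fun m => m < n.-1) Hc) /= IH.
Qed.

Lemma vw_all u : all (fun c => c < n.-1) (vw u).
Proof. by apply/allP => c /mapP [i _ ->]; exact: ltn_ord. Qed.

Lemma vw_cat u v : vw (u ++ v) = vw u ++ vw v.
Proof. exact: map_cat. Qed.

Lemma uw_cat s t : uw (s ++ t) = uw s ++ uw t.
Proof. exact: pmap_cat. Qed.

Lemma beq_to u v : beq n u v -> beqN (vw u) (vw v).
Proof.
elim=> {u v} [u v H| u | u v _ IH | u v w _ IH1 _ IH2].
- case: H => a [b [x [y [Hr [-> ->]]]]]; rewrite !vw_cat; apply: rst_step.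
  case: Hr => [[i [j [C [-> ->]]]]|[i [j [C [-> ->]]]]].
  + exact: StF.
  + exact: StA.
- exact: br0.
- exact: bs.
- exact: bt IH2.
Qed.

Lemma beq_from s t : beqN s t -> all (fun c => c < n.-1) s -> beq n (uw s) (uw t).
Proof.
elim=> {s t} [s t H| s | s t Hst IH | s t w Hst IH1 Htw IH2] Hs.
- apply: rst_step; case: H Hs => a b x y F; rewrite !all_cat /= => /and3P [_ /and3P [Hx Hy _] _];
  rewrite !uw_cat /uw /= (insubT (fun m => m < n.-1) Hx) (insubT (fun m => m < n.-1) Hy) /=.
  + exists (uw a), (uw b), [:: Sub x Hx; Sub y Hy], [:: Sub y Hy; Sub x Hx].
    split; last by [].
    by left; exists (Sub x Hx), (Sub y Hy).
  + exists (uw a), (uw b), [:: Sub x Hx; Sub y Hy; Sub x Hx], [:: Sub y Hy; Sub x Hx; Sub y Hy].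
    split; last by [].
    by right; exists (Sub x Hx), (Sub y Hy).
- exact: rst_refl.
- apply: rst_sym; apply: IH; by rewrite (beqN_all _ Hst).
- apply: rst_trans (IH1 Hs) (IH2 _); by rewrite -(beqN_all _ Hst).
Qed.

Lemma beq_iff u v : beq n u v <-> beqN (vw u) (vw v).
Proof.
split; first exact: beq_to.
by move=> H; rewrite -(uwK u) -(uwK v); apply: beq_from => //; apply: vw_all.
Qed.

Lemma ldiv_iff u w : ldiv n u w <-> ldivN (vw u) (vw w).
Proof.
split=> [[v /beq_iff H]|[v H]].
- by exists (vw v); rewrite -vw_cat.
- have Hv : all (fun c => c < n.-1) v.
    by move: (beqN_all n.-1 H); rewrite vw_all all_cat => /andP [].
  exists (uw v); apply/beq_iff; by rewrite vw_cat vwK.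
Qed.

Lemma rdiv_iff u w : rdiv n u w <-> rdivN (vw u) (vw w).
Proof.
split=> [[v /beq_iff H]|[v H]].
- by exists (vw v); rewrite -vw_cat.
- have Hv : all (fun c => c < n.-1) v.
    by move: (beqN_all n.-1 H); rewrite vw_all all_cat => /andP [].
  exists (uw v); apply/beq_iff; by rewrite vw_cat vwK.
Qed.

Lemma delta_uw m : delta n m = uw (DN m).
Proof. by elim: m => [|m IH] //=; rewrite IH uw_cat. Qed.

Lemma delta_vw m : m <= n -> vw (delta n m) = DN m.
Proof.
move=> Hm; rewrite delta_uw vwK //; apply: sub_all (DN_all m) => c; lia.
Qed.

Lemma DN_pred m : DN m = DN m.-1.+1.
Proof. by case: m. Qed.

Lemma nrel_delta m (w : word n) : m < n ->
  nrel n w (delta n m) = `[< rdiv n (delta n m) w >].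
Proof.
move=> Hm; have Hd := delta_vw (ltnW Hm).
apply/idP/idP => [/subsetP Hs | /asboolP Hr].
- apply/asboolP; apply/rdiv_iff; rewrite Hd DN_pred; apply/mainN => i Hi.
  have Hi' : i < n.-1 by lia.
  have H1 : Ordinal Hi' \in DL n (delta n m).
    by rewrite inE; apply/asboolP/ldiv_iff; rewrite Hd DN_pred; exact: ldiv_DN.
  by have := Hs _ H1; rewrite inE => /asboolP /rdiv_iff.
- rewrite /nrel; apply/subsetP => i; rewrite !inE => /asboolP /ldiv_iff; rewrite Hd DN_pred.
  move/ldiv_DN_inv => Hi; apply/asboolP/rdiv_iff.
  move: Hr => /rdiv_iff; rewrite Hd DN_pred => /mainN; exact.
Qed.
End Transfer.

Lemma sorted_rcons2 (T : Type) (e : rel T) s a c :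
  sorted e (rcons (rcons s a) c) = sorted e (rcons s a) && e a c.
Proof.
case: s => [|x s] /=; first by rewrite andbT.
by rewrite rcons_path last_rcons.
Qed.

Lemma count_rcons (T : finType) k (P : seq T -> bool) :
  #|[set t : k.+1.-tuple T | P t]| =
  \sum_(x : T) #|[set t : k.-tuple T | P (rcons t x)]|.
Proof.
rewrite -sum1dep_card.
have -> : \sum_(x : T) #|[set t : k.-tuple T | P (rcons t x)]| =
          \sum_(x : T) \sum_(t : k.-tuple T | P (rcons t x)) 1.
  by apply: eq_bigr => x _; rewrite sum1dep_card.
rewrite pair_big_dep /=.
pose h (p : T * k.-tuple T) : k.+1.-tuple T := rcons_tuple p.2 p.1.
have hb : bijective h.
  pose g (t : k.+1.-tuple T) : T * k.-tuple T :=
    (last (thead t) (behead t), belast_tuple (thead t) (behead_tuple t)).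
  exists g.
  - case=> x t; rewrite /g /h /=.
    set u := rcons_tuple t x.
    have E : rcons (belast (thead u) (behead u)) (last (thead u) (behead u)) = rcons t x.
      rewrite -lastI; exact: (esym (congr1 val (tuple_eta u))).
    case: (rcons_inj E) => E1 E2.
    congr (_, _) => //; apply: val_inj; exact: E1.
  - move=> t; apply: val_inj; rewrite /h /g /= -lastI.
    exact: (esym (congr1 val (tuple_eta t))).
rewrite (reindex h (onW_bij _ hb)) /=.
by apply: eq_bigl => p.
Qed.

Theorem lemma4p3 (n d r : nat) :
  (1 <= n)%N -> (2 <= d)%N -> (1 <= r <= n)%N ->
  b n d (delta n (n - r)) =
  (\sum_(x : SB n | `[< rdiv n (delta n (n - r)) (sbw n x) >]) b n d.-1 (sbw n x))%N.
Proof.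
move=> Hn Hd /andP [Hr1 Hr2].
have Hm : n - r < n by lia.
case: d Hd => [|[|e]] // _.
rewrite /b.
rewrite (count_rcons _ (fun s => normal n (rcons (map (sbw n) s) (delta n (n - r))))).
rewrite [RHS]big_mkcond; apply: eq_bigr => x _ /=.
rewrite -(nrel_delta _ Hm).
have -> : [set t : e.-tuple (SB n) | normal n (rcons (map (sbw n) (rcons t x)) (delta n (n - r)))]
  = [set t : e.-tuple (SB n) | normal n (rcons (map (sbw n) t) (sbw n x)) && nrel n (sbw n x) (delta n (n - r))].
  by apply/setP => t; rewrite !inE map_rcons /normal sorted_rcons2.
case: (nrel n (sbw n x) (delta n (n - r))).
- by apply: eq_card => t; rewrite !inE andbT.
- by apply/eqP; rewrite cards_eq0; apply/eqP/setP => t; rewrite !inE andbF.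
Qed.
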